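(* Consider binary classification of real data points $x \in \mathbb{R}$ drawn from a linearly separable data distribution $p_d$, where the class with label $y=-1$ has class-conditional mean $\mu_1$ and the class with label $y=+1$ has class-conditional mean $\mu_2$, with $\mu_1<\mu_2$, and let $\omega^\star = \frac{\mu_1+\mu_2}{2}$ be the max-margin decision boundary. Run UDP as follows, starting from some $\omega_0 \in \mathbb{R}$ with a fixed step size $\eta \in (0,1)$. At iteration $n$, given the current boundary $\omega_n$: sample $x_n^{(1)} \sim p_d(x \mid y=-1)$ and $x_n^{(2)} \sim p_d(x\mid y=+1)$; form the uncertainty-driven perturbations $\tilde x_n^{(1)} = \beta_n x_n^{(1)} + (1-\beta_n)\omega_n$ and $\tilde x_n^{(2)} = \gamma_n x_n^{(2)} + (1-\gamma_n)\omega_n$, where $\beta_n,\gamma_n \in (0,1)$ are random with $\mathbb{E}[\beta_n]=\mathbb{E}[\gamma_n]=\tfrac12$; an oracle returns $\tilde\omega_n = \alpha_n \tilde x_n^{(1)} + (1-\alpha_n)\tilde x_n^{(2)}$ with $\alpha_n \sim \mathcal{U}(0,1)$ (so $\mathbb{E}[\alpha_n]=\tfrac12$), where $\alpha_n,\beta_n,\gamma_n,x_n^{(1)},x_n^{(2)}$ are mutually independent and independent of $\omega_n$; and update $\omega_{n+1} = \omega_n + \eta(\tilde\omega_n - \omega_n)$. Then, in expectation, the iterate moves towards the max-margin boundary: $\mathbb{E}[\omega_{n+1}\mid\omega_n]$ lies on the segment between $\omega_n$ and $\omega^\star$.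
   Context: UDP (uncertainty-driven perturbations) perturbs each training point by moving it toward the current decision boundary, which is where the model's uncertainty is maximal; in this one-dimensional model the perturbed point is a random convex combination of the original point and the current boundary $\omega_n$. The ''oracle'' is a weak abstraction of the optimizer: given two (perturbed) data points of opposite classes, it returns a point lying between them, chosen uniformly at random on the segment. *)

(* Defs.v *)
From HB Require Import structures.
From mathcomp Require Import all_boot all_order all_algebra.
From mathcomp Require Import all_classical all_reals all_analysis.
From mathcomp Require Import probability uniform_distribution.
Set Implicit Arguments. Unset Strict Implicit. Unset Printing Implicit Defensive.
Import Order.TTheory GRing.Theory Num.Theory.
Local Open Scope classical_set_scope.
Local Open Scope ring_scope.

(* Taking B i = setT for the indices outside a subfamily
   yields the product rule for every subfamily. *)
Definition mutually_independent {d} {T : measurableType d} {R : realType}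
  (P : probability T R) (I : finType) (X : I -> T -> R) : Prop :=
  forall B : I -> set R, (forall i, measurable (B i)) ->
    P (\bigcap_(i in [set: I]) (X i @^-1` B i)) =
    (\prod_(i : I) P (X i @^-1` B i))%E.

Definition udp_step {R : realType} (eta w a b c x1 x2 : R) : R :=
  let xt1 := b * x1 + (1 - b) * w in
  let xt2 := c * x2 + (1 - c) * w in
  let wt := a * xt1 + (1 - a) * xt2 in
  w + eta * (wt - w).

(* Main.v *)
Require Import Defs.
From HB Require Import structures.
From mathcomp Require Import all_boot all_order all_algebra.
From mathcomp Require Import all_classical all_reals all_analysis.
From mathcomp Require Import probability uniform_distribution.
Import Order.TTheory GRing.Theory Num.Theory.
Local Open Scope classical_set_scope.
Local Open Scope ring_scope.
Notation mEFinP := measurable_realfun.measurable_EFinP.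
Notation mfunM := measurable_realfun.measurable_funM.
From mathcomp Require Import measurable_realfun.
Lemma mM d (T : measurableType d) (R : realType) (f g : T -> R) :
  measurable_fun setT f -> measurable_fun setT g ->
  measurable_fun setT (fun x => f x * g x).
Proof. exact: measurable_funM. Qed.
Lemma mI d (T : measurableType d) (R : realType) (A : set R) (X : T -> R) :
  measurable A -> measurable_fun setT X ->
  measurable_fun setT (fun x => (\1_A (X x) : R)).
Proof. by move=> mA mX; exact: (measurableT_comp (measurable_indic mA) mX). Qed.
Lemma mE d (T : measurableType d) (R : realType) (g : T -> R) :
  measurable_fun setT g -> measurable_fun setT (fun x => (g x)%:E).
Proof. by move=> mg; exact: (measurable_EFinP _ g).2. Qed.
Import HBNNSimple.
Section LS.
Context d (T : measurableType d) (R : realType) (P : {measure set T -> \bar R}).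
Local Open Scope ereal_scope.

Lemma simple_split (X : T -> R) (mX : measurable_fun setT X) (psi : T -> R)
  (mpsi : measurable_fun setT psi) (psi0 : forall x, (0 <= psi x)%R)
  (h : {nnsfun R >-> R}) :
  \int[P]_x (h (X x) * psi x)%:E =
  \sum_(r \in range h) r%:E * \int[P]_x (\1_(h @^-1` [set r]) (X x) * psi x)%:E.
Proof.
under eq_integral => x _.
  rewrite (fimfunE h (X x)) EFinM -fsumEFin// ge0_mule_fsuml; last first.
    by move=> r; rewrite EFinM nnfun_muleindic_ge0.
  over.
rewrite ge0_integral_fsum//; last 2 first.
- move=> r; apply: emeasurable_funM => //.
  + apply/mEFinP; apply: mM => //.
    exact: mI.
  + exact/mEFinP.
- by move=> r x _; rewrite EFinM mule_ge0 ?nnfun_muleindic_ge0// lee_fin.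
apply: eq_fsbigr => r /set_mem [t _ <-].
rewrite -ge0_integralZl//; last 3 first.
- apply/mEFinP; apply: mM => //.
  exact: mI.
- by move=> x _; rewrite lee_fin mulr_ge0.
- by rewrite lee_fin fun_ge0.
by apply: eq_integral => x _; rewrite -!EFinM mulrA.
Qed.

Lemma LS (X : T -> R) (mX : measurable_fun setT X) (phi psi : T -> R)
  (mphi : measurable_fun setT phi) (phi0 : forall x, (0 <= phi x)%R)
  (mpsi : measurable_fun setT psi) (psi0 : forall x, (0 <= psi x)%R) :
  (forall A, measurable A -> \int[P]_x (\1_A (X x) * phi x)%:E =
                            \int[P]_x (\1_A (X x) * psi x)%:E) ->
  forall f : R -> R, measurable_fun setT f -> (forall r, (0 <= f r)%R) ->
  \int[P]_x (f (X x) * phi x)%:E = \int[P]_x (f (X x) * psi x)%:E.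
Proof.
move=> H f mf f0.
have mfE : measurable_fun [set: R] (EFin \o f) by exact/mEFinP.
pose h := nnsfun_approx measurableT mfE.
have key (g : T -> R) : measurable_fun setT g -> (forall x, (0 <= g x)%R) ->
   \int[P]_x (f (X x) * g x)%:E = limn (fun n => \int[P]_x (h n (X x) * g x)%:E).
  move=> mg g0.
  rewrite -monotone_convergence//.
  - apply: eq_integral => x _; apply/esym/cvg_lim => //.
    rewrite EFinM; under eq_fun do rewrite EFinM.
    apply: cvgeMr => //.
    by apply: cvg_nnsfun_approx => // ? _; rewrite lee_fin.
  - move=> n; apply/mEFinP; apply: mM => //.
    exact: measurableT_comp.
  - by move=> n x _; rewrite lee_fin mulr_ge0.
  - move=> x _ m n mn; rewrite lee_fin ler_wpM2r//.
    exact/lefP/nd_nnsfun_approx.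
rewrite (key _ mphi phi0) (key _ mpsi psi0); congr (limn _); apply/funext => n.
rewrite !simple_split//; apply: eq_fsbigr => r _; rewrite H//.
Qed.
End LS.
From mathcomp Require Import ring lra.
Section TL.
Context d (T : measurableType d) (R : realType) (P : probability T R).
Local Open Scope ereal_scope.

Lemma mpre (U : T -> R) (A : set R) : measurable_fun setT U -> measurable A ->
  measurable (U @^-1` A).
Proof. by move=> mU mA; rewrite -(setTI (U @^-1` A)); exact: mU. Qed.

Lemma Pfin (A : set T) : measurable A -> P A \is a fin_num.
Proof.
move=> mA; rewrite ge0_fin_numE ?measure_ge0//.
exact: (le_lt_trans (probability_le1 _ mA) (ltry _)).
Qed.

Lemma int_indic_cst (X : T -> R) (A : set R) (k : R) : measurable_fun setT X ->
  measurable A -> (0 <= k)%R ->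
  \int[P]_x (\1_A (X x) * k)%:E = P (X @^-1` A) * k%:E.
Proof.
move=> mX mA k0; under eq_integral do rewrite EFinM.
rewrite ge0_integralZr//; first last.
- by apply: mE; exact: mI.
congr (_ * _); rewrite -(setIT (X @^-1` A)) -integral_indic//; exact: mpre.
Qed.

Lemma int_cst (g : T -> R) (k : R) : measurable_fun setT g ->
  (forall x, 0 <= g x)%R -> (0 <= k)%R ->
  \int[P]_x (g x * k)%:E = \int[P]_x (g x)%:E * k%:E.
Proof.
move=> mg g0 k0; under eq_integral do rewrite EFinM.
rewrite ge0_integralZr//; first last.
- by move=> x _; rewrite lee_fin.
- by apply/mEFinP.
Qed.
End TL.
Section Triple.
Context d (T : measurableType d) (R : realType) (P : probability T R).
Local Open Scope ereal_scope.
Variables (U V W : T -> R).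
Hypotheses (mU : measurable_fun setT U) (mV : measurable_fun setT V)
  (mW : measurable_fun setT W).
Hypothesis H3 : forall A B C, measurable A -> measurable B -> measurable C ->
  P (U @^-1` A `&` V @^-1` B `&` W @^-1` C) =
  P (U @^-1` A) * P (V @^-1` B) * P (W @^-1` C).

Lemma S1 A B C : measurable A -> measurable B -> measurable C ->
  \int[P]_x (\1_A (U x) * (\1_B (V x) * \1_C (W x)))%:E =
  P (U @^-1` A) * P (V @^-1` B) * P (W @^-1` C).
Proof.
move=> mA mB mC; rewrite -H3//.
rewrite -[in RHS](setIT (_ `&` _)) -integral_indic; last first.
  by apply: measurableI; [apply: measurableI|]; exact: mpre.
  by [].
apply: eq_integral => x _; congr EFin; rewrite !indicE !in_setI.
have pE (Z : T -> R) S : (x \in Z @^-1` S) = (Z x \in S) by apply/idP/idP; rewrite !inE.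
rewrite !pE.
by case: (U x \in A); case: (V x \in B); case: (W x \in C); rewrite /= ?mul0r ?mulr0 ?mulr1.
Qed.

Lemma ind0 (A : set R) r : (0 <= \1_A r :> R)%R.
Proof. by rewrite indicE. Qed.

Lemma fin_int (g : T -> R) : (forall x, 0 <= g x)%R ->
  \int[P]_x (g x)%:E < +oo -> \int[P]_x (g x)%:E \is a fin_num.
Proof.
by move=> g0 hg; rewrite ge0_fin_numE// integral_ge0// => x _; rewrite lee_fin.
Qed.

Lemma S2 B C : measurable B -> measurable C ->
  forall f : R -> R, measurable_fun setT f -> (forall r, 0 <= f r)%R ->
  \int[P]_x (f (U x) * (\1_B (V x) * \1_C (W x)))%:E =
  \int[P]_x (f (U x))%:E * (P (V @^-1` B) * P (W @^-1` C)).
Proof.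
move=> mB mC f mf f0.
set k := fine (P (V @^-1` B) * P (W @^-1` C)).
have kE : k%:E = P (V @^-1` B) * P (W @^-1` C).
  by rewrite fineK// fin_numM// Pfin//; exact: mpre.
have k0 : (0 <= k)%R by rewrite -lee_fin kE mule_ge0// measure_ge0.
rewrite -kE -int_cst//; last exact: measurableT_comp.
apply: (@LS _ _ _ P U mU (fun x => \1_B (V x) * \1_C (W x))%R (fun=> k)) => //.
- by apply: mM; exact: mI.
- move=> A mA; rewrite S1// int_indic_cst// kE muleA//.
Qed.

Lemma S3 C : measurable C ->
  forall f : R -> R, measurable_fun setT f -> (forall r, 0 <= f r)%R ->
  \int[P]_x (f (U x))%:E < +oo ->
  forall g : R -> R, measurable_fun setT g -> (forall r, 0 <= g r)%R ->
  \int[P]_x (g (V x) * (f (U x) * \1_C (W x)))%:E =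
  \int[P]_x (g (V x))%:E * (\int[P]_x (f (U x))%:E * P (W @^-1` C)).
Proof.
move=> mC f mf f0 hf g mg g0.
set k := fine (\int[P]_x (f (U x))%:E * P (W @^-1` C)).
have kE : k%:E = \int[P]_x (f (U x))%:E * P (W @^-1` C).
  by rewrite fineK// fin_numM// ?Pfin ?fin_int//; exact: mpre.
have k0 : (0 <= k)%R.
  rewrite -lee_fin kE mule_ge0// ?measure_ge0// integral_ge0// => x _.
  by rewrite lee_fin.
rewrite -kE -int_cst//; last exact: measurableT_comp.
apply: (@LS _ _ _ P V mV (fun x => f (U x) * \1_C (W x))%R (fun=> k)) => //.
- apply: mM; [exact: measurableT_comp|exact: mI].
- by move=> x; rewrite mulr_ge0// ind0.
- move=> B mB.
  transitivity (\int[P]_x (f (U x) * (\1_B (V x) * \1_C (W x)))%:E).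
    by apply: eq_integral => x _; congr EFin; ring.
  by rewrite S2// int_indic_cst// kE muleCA.
Qed.

Lemma S4 (f g h : R -> R) :
  measurable_fun setT f -> (forall r, 0 <= f r)%R ->
  \int[P]_x (f (U x))%:E < +oo ->
  measurable_fun setT g -> (forall r, 0 <= g r)%R ->
  \int[P]_x (g (V x))%:E < +oo ->
  measurable_fun setT h -> (forall r, 0 <= h r)%R ->
  \int[P]_x (h (W x) * (g (V x) * f (U x)))%:E =
  \int[P]_x (h (W x))%:E * (\int[P]_x (g (V x))%:E * \int[P]_x (f (U x))%:E).
Proof.
move=> mf f0 hf mg g0 hg mh h0.
set k := fine (\int[P]_x (g (V x))%:E * \int[P]_x (f (U x))%:E).
have kE : k%:E = \int[P]_x (g (V x))%:E * \int[P]_x (f (U x))%:E.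
  by rewrite fineK// fin_numM// fin_int.
have k0 : (0 <= k)%R.
  by rewrite -lee_fin kE mule_ge0// integral_ge0// => x _; rewrite lee_fin.
rewrite -kE -int_cst//; last exact: measurableT_comp.
apply: (@LS _ _ _ P W mW (fun x => g (V x) * f (U x))%R (fun=> k)) => //.
- apply: mM; exact: measurableT_comp.
- by move=> x; rewrite mulr_ge0.
- move=> C mC.
  transitivity (\int[P]_x (g (V x) * (f (U x) * \1_C (W x)))%:E).
    by apply: eq_integral => x _; congr EFin; ring.
  rewrite S3// int_indic_cst// kE.
  by rewrite muleA muleC.
Qed.

Lemma TL (f g h : R -> R) :
  measurable_fun setT f -> (forall r, 0 <= f r)%R ->
  \int[P]_x (f (U x))%:E < +oo ->
  measurable_fun setT g -> (forall r, 0 <= g r)%R ->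
  \int[P]_x (g (V x))%:E < +oo ->
  measurable_fun setT h -> (forall r, 0 <= h r)%R ->
  \int[P]_x (f (U x) * g (V x) * h (W x))%:E =
  \int[P]_x (f (U x))%:E * \int[P]_x (g (V x))%:E * \int[P]_x (h (W x))%:E.
Proof.
move=> mf f0 hf mg g0 hg mh h0.
transitivity (\int[P]_x (h (W x) * (g (V x) * f (U x)))%:E).
  by apply: eq_integral => x _; congr EFin; ring.
by rewrite S4// muleC (muleC (\int[P]_x (g (V x))%:E)).
Qed.
End Triple.

Definition pos {R : realType} (r : R) := Num.max r 0.
Definition neg {R : realType} (r : R) := Num.max (- r) 0.
Definition om {R : realType} (r : R) := Num.max (1 - r) 0.

Lemma pos_ge0 {R : realType} (r : R) : 0 <= pos r.
Proof. by rewrite /pos le_max lexx orbT. Qed.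
Lemma neg_ge0 {R : realType} (r : R) : 0 <= neg r.
Proof. by rewrite /neg le_max lexx orbT. Qed.
Lemma om_ge0 {R : realType} (r : R) : 0 <= om r.
Proof. by rewrite /om le_max lexx orbT. Qed.
Lemma posB {R : realType} (r : R) : pos r - neg r = r.
Proof.
rewrite /pos /neg !maxEle; case: ifPn => h1; case: ifPn => h2;
  rewrite -?ltNge in h1 h2; lra.
Qed.

Lemma mpos {R : realType} : measurable_fun setT (@pos R).
Proof. exact: measurable_maxr. Qed.
Lemma mneg {R : realType} : measurable_fun setT (@neg R).
Proof. apply: measurable_maxr => //; exact: measurableT_comp. Qed.
Lemma mom {R : realType} : measurable_fun setT (@om R).
Proof. apply: measurable_maxr => //; apply: measurable_funB => //. Qed.
Lemma MI5 (R : realType) (d : measure_display) (T : measurableType d)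
  (P : probability T R) (a b c x y : T -> R) :
  mutually_independent P (fun i : 'I_5 => nth a [:: a; b; c; x; y] i) ->
  forall A0 A1 A2 A3 A4 : set R, measurable A0 -> measurable A1 ->
  measurable A2 -> measurable A3 -> measurable A4 ->
  P (a @^-1` A0 `&` b @^-1` A1 `&` c @^-1` A2 `&` x @^-1` A3 `&` y @^-1` A4) =
  (P (a @^-1` A0) * P (b @^-1` A1) * P (c @^-1` A2) * P (x @^-1` A3) * P (y @^-1` A4))%E.
Proof.
move=> MI A0 A1 A2 A3 A4 m0 m1 m2 m3 m4.
have := MI (fun i : 'I_5 => nth setT [:: A0; A1; A2; A3; A4] i).
rewrite !big_ord_recl big_ord0 /= mule1 !muleA => <-; last by case=> [[|[|[|[|[|i]]]]] ?].
congr (P _); apply/seteqP; split => s /=.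
- move=> [[[[h0 h1] h2] h3] h4] [[|[|[|[|[|i]]]]] ?] _ //=.
- move=> H.
  have := H (@Ordinal 5 0 erefl) I; have := H (@Ordinal 5 1 erefl) I;
  have := H (@Ordinal 5 2 erefl) I; have := H (@Ordinal 5 3 erefl) I;
  have := H (@Ordinal 5 4 erefl) I => /= *.
  by repeat split.
Qed.
From mathcomp Require beta_distribution.

Section Unif.
Context (R : realType) (d : measure_display) (T : measurableType d)
  (P : probability T R) (alpha : {RV P >-> R}).
Hypothesis DU : forall A : set R, measurable A ->
     distribution P alpha A = @uniform_prob R 0 1 ltr01 A.
Local Open Scope ereal_scope.

Lemma unif_int (f : R -> R) : measurable_fun setT f -> (forall r, 0 <= f r)%R ->
  \int[P]_x (f (alpha x))%:E = \int[lebesgue_measure]_(x in `[0%R, 1%R]) (f x)%:E.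
Proof.
move=> mf f0.
have ma : measurable_fun [set: T] (alpha : T -> measurableTypeR R).
  have ma0 : measurable_fun [set: T] (alpha : T -> R) by [].
  move=> mT B mB; exact: (ma0 mT B mB).
have mf' : measurable_fun [set: measurableTypeR R] (EFin \o f : measurableTypeR R -> \bar R).
  move=> mT B mB; exact: (@mE _ _ _ f mf mT B mB).
have := @ge0_integral_pushforward _ _ T (measurableTypeR R) R (alpha : T -> measurableTypeR R) ma P setT (EFin \o f) measurableT mf' (fun y _ => f0 y).
rewrite preimage_setT => <-.
transitivity (\int[uniform_prob ltr01]_y (EFin \o f) y).
  apply: eq_measure_integral => A mA _; exact: DU.
rewrite integral_uniform //=.
by rewrite subr0 invr1 mul1e.
Qed.

Lemma unif_ae : P (alpha @^-1` (~` `[0%R, 1%R])) = 0.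
Proof.
have := @DU (~` `[0%R, 1%R]) (measurableC (measurable_itv `[0%R, 1%R])).
rewrite /distribution /pushforward => ->.
by rewrite /uniform_prob integral_uniform_pdf setICl integral_set0.
Qed.

Lemma int01_x : \int[lebesgue_measure]_(x in `[0%R, 1%R]) (x : R)%:E = (2^-1)%:E.
Proof.
have := @beta_distribution.EFin_beta_fun R 2 1.
rewrite beta_distribution.beta_fun_sym beta_distribution.beta_fun1Sn => ->.
rewrite integral_mkcond; apply: eq_integral => x _ /=.
rewrite /patch; case: ifP => _ //.
by rewrite /beta_distribution.XMonemX expr1 expr0 mulr1.
Qed.

Lemma int01_1x : \int[lebesgue_measure]_(x in `[0%R, 1%R]) (1 - x : R)%:E = (2^-1)%:E.
Proof.
have := @beta_distribution.EFin_beta_fun R 1 2.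
rewrite beta_distribution.beta_fun1Sn => ->.
rewrite integral_mkcond; apply: eq_integral => x _ /=.
rewrite /patch; case: ifP => _ //.
by rewrite /beta_distribution.XMonemX expr0 expr1 mul1r.
Qed.
End Unif.

Section Expect.
Context (R : realType) (d : measure_display) (T : measurableType d)
  (P : probability T R).
Local Open Scope ereal_scope.

Lemma Eint (X : T -> R) : 'E_P[X] = (\int[P]_x (X x)%:E)%E.
Proof. by rewrite unlock. Qed.

Lemma nn_Lfun (g : T -> R) : measurable_fun setT g -> (forall x, 0 <= g x)%R ->
  (\int[P]_x (g x)%:E < +oo)%E -> g \in Lfun P 1.
Proof.
move=> mg g0 hg; apply/Lfun1_integrable/integrableP; split.
  exact: mE.
rewrite (_ : (fun x => _) = (fun x => (g x)%:E))//.
by apply/funext => x /=; rewrite ger0_norm.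
Qed.

Lemma E6 (t1 t2 t3 t4 t5 t6 : T -> R) (w eta e1 e2 e3 e4 e5 e6 : R) :
  t1 \in Lfun P 1 -> t2 \in Lfun P 1 -> t3 \in Lfun P 1 ->
  t4 \in Lfun P 1 -> t5 \in Lfun P 1 -> t6 \in Lfun P 1 ->
  'E_P[t1] = e1%:E -> 'E_P[t2] = e2%:E -> 'E_P[t3] = e3%:E ->
  'E_P[t4] = e4%:E -> 'E_P[t5] = e5%:E -> 'E_P[t6] = e6%:E ->
  'E_P[(cst w \+ eta \o* (t1 \+ (-1) \o* t2 \+ (- w) \o* t3 \+ t4 \+ (-1) \o* t5
         \+ (- w) \o* t6))%R] =
  (w + eta * (e1 - e2 - w * e3 + e4 - e5 - w * e6))%R%:E.
Proof.
move=> l1 l2 l3 l4 l5 l6 h1 h2 h3 h4 h5 h6.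
have S k f : f \in Lfun P 1 -> k \o* f \in Lfun P 1 by move=> ?; exact: Lfun_scale.
have L2 : (t1 \+ (-1) \o* t2)%R \in Lfun P 1 by apply: rpredD => //; exact: S.
have L3 : (t1 \+ (-1) \o* t2 \+ (- w) \o* t3)%R \in Lfun P 1 by apply: rpredD => //; exact: S.
have L4 : (t1 \+ (-1) \o* t2 \+ (- w) \o* t3 \+ t4)%R \in Lfun P 1 by apply: rpredD.
have L5 : (t1 \+ (-1) \o* t2 \+ (- w) \o* t3 \+ t4 \+ (-1) \o* t5)%R \in Lfun P 1
  by apply: rpredD => //; exact: S.
have L6 : (t1 \+ (-1) \o* t2 \+ (- w) \o* t3 \+ t4 \+ (-1) \o* t5
         \+ (- w) \o* t6)%R \in Lfun P 1 by apply: rpredD => //; exact: S.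
rewrite expectationD ?expectation_cst; last 2 first.
- exact: Lfun_cst.
- exact: S.
rewrite expectationZl // expectationD ?S// expectationZl //.
rewrite expectationD ?S// expectationZl // expectationD ?S//.
rewrite expectationD ?S// expectationZl // expectationD ?S// expectationZl //.
rewrite h1 h2 h3 h4 h5 h6 -!EFinM -!EFinD; congr EFin; ring.
Qed.
End Expect.

Lemma pos_id {R : realType} (r : R) : 0 <= r -> pos r = r.
Proof. by move=> h; rewrite /pos maxEle; case: ifPn => h1; lra. Qed.
Lemma om_id {R : realType} (r : R) : r <= 1 -> om r = 1 - r.
Proof. by move=> h; rewrite /om maxEle; case: ifPn => h1; rewrite -?ltNge in h1; lra. Qed.
Lemma pos_le {R : realType} (r : R) : pos r <= `|r|.
Proof. by rewrite /pos maxEle; case: ifPn => h1; [exact: normr_ge0|exact: ler_norm]. Qed.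
Lemma neg_le {R : realType} (r : R) : neg r <= `|r|.
Proof. by rewrite /neg maxEle; case: ifPn => h1; [exact: normr_ge0|rewrite -normrN; exact: ler_norm]. Qed.

Lemma mDf d (T : measurableType d) (R : realType) (f g : T -> R) :
  measurable_fun setT f -> measurable_fun setT g ->
  measurable_fun setT (fun x => f x + g x).
Proof. exact: measurable_funD. Qed.
Lemma mBf d (T : measurableType d) (R : realType) (f g : T -> R) :
  measurable_fun setT f -> measurable_fun setT g ->
  measurable_fun setT (fun x => f x - g x).
Proof. exact: measurable_funB. Qed.
Lemma mCf d (T : measurableType d) (R : realType) (k : R) :
  measurable_fun setT (fun x : T => k).
Proof. exact: measurable_cst. Qed.
Lemma mNf d (T : measurableType d) (R : realType) (f : T -> R) :
  measurable_fun setT f -> measurable_fun setT (fun x => - f x).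
Proof. exact: measurableT_comp. Qed.
Ltac mtac := repeat first [ apply: mDf | apply: mBf | apply: mM | apply: mNf | apply: mCf | assumption ].

Theorem theorem1 (R : realType) (d : measure_display) (T : measurableType d)
  (P : probability T R)
  (alpha beta gamma x1 x2 : {RV P >-> R})
  (mu1 mu2 eta w : R) :
  P.-integrable setT (EFin \o x1) -> P.-integrable setT (EFin \o x2) ->
  ('E_P[x1] = mu1%:E)%E -> ('E_P[x2] = mu2%:E)%E -> mu1 < mu2 ->
  (exists t : R, {ae P, forall s, x1 s < t /\ t < x2 s}) ->
  {ae P, forall s, 0 < beta s < 1} -> {ae P, forall s, 0 < gamma s < 1} ->
  ('E_P[beta] = (1 / 2)%:E)%E -> ('E_P[gamma] = (1 / 2)%:E)%E ->
  (forall A : set R, measurable A ->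
     distribution P alpha A = @uniform_prob R 0 1 ltr01 A) ->
  mutually_independent P
    (fun i : 'I_5 => nth (alpha : T -> R)
       [:: (alpha : T -> R); (beta : T -> R); (gamma : T -> R);
           (x1 : T -> R); (x2 : T -> R)] i) ->
  0 < eta < 1 ->
  exists lambda : R, 0 <= lambda <= 1 /\
    ('E_P[fun s => udp_step eta w (alpha s) (beta s) (gamma s) (x1 s) (x2 s)]
      = ((1 - lambda) * w + lambda * ((mu1 + mu2) / 2))%:E)%E.
Proof.
move=> ix1 ix2 Ex1 Ex2 _ _ aeb aec Eb Ec DU MI /andP[eta0 eta1].
exists (eta / 2); split; first by apply/andP; split; lra.
have mA : measurable_fun setT (alpha : T -> R) by [].
have mB : measurable_fun setT (beta : T -> R) by [].
have mC : measurable_fun setT (gamma : T -> R) by [].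
have mX1 : measurable_fun setT (x1 : T -> R) by [].
have mX2 : measurable_fun setT (x2 : T -> R) by [].
have H3b : forall A B C, measurable A -> measurable B -> measurable C ->
  P (alpha @^-1` A `&` beta @^-1` B `&` x1 @^-1` C) =
  (P (alpha @^-1` A) * P (beta @^-1` B) * P (x1 @^-1` C))%E.
  move=> A B C mA' mB' mC'.
  have := @MI5 _ _ _ P _ _ _ _ _ MI _ _ _ _ _ mA' mB' measurableT mC' measurableT.
  by rewrite !preimage_setT !setIT !probability_setT !mule1.
have H3c : forall A B C, measurable A -> measurable B -> measurable C ->
  P (alpha @^-1` A `&` gamma @^-1` B `&` x2 @^-1` C) =
  (P (alpha @^-1` A) * P (gamma @^-1` B) * P (x2 @^-1` C))%E.
  move=> A B C mA' mB' mC'.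
  have := @MI5 _ _ _ P _ _ _ _ _ MI _ _ _ _ _ mA' measurableT mB' measurableT mC'.
  by rewrite !preimage_setT !setIT !probability_setT !mule1.

have mp : forall X : T -> R, measurable_fun setT X -> measurable_fun setT (fun x => pos (X x)).
  by move=> X mX; exact: measurableT_comp mpos mX.
have mn : forall X : T -> R, measurable_fun setT X -> measurable_fun setT (fun x => neg (X x)).
  by move=> X mX; exact: measurableT_comp mneg mX.
have mo : forall X : T -> R, measurable_fun setT X -> measurable_fun setT (fun x => om (X x)).
  by move=> X mX; exact: measurableT_comp mom mX.
have IA : (\int[P]_x (pos (alpha x))%:E = (2^-1)%:E)%E.
  rewrite (@unif_int _ _ _ P alpha DU _ mpos pos_ge0) -int01_x.
  by apply: eq_integral => x; rewrite inE/= in_itv/= => /andP[x0 _]; rewrite pos_id.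
have IOA : (\int[P]_x (om (alpha x))%:E = (2^-1)%:E)%E.
  rewrite (@unif_int _ _ _ P alpha DU _ mom om_ge0) -int01_1x.
  by apply: eq_integral => x; rewrite inE/= in_itv/= => /andP[_ x1']; rewrite om_id.
have IB : (\int[P]_x (pos (beta x))%:E = (2^-1)%:E)%E.
  rewrite -div1r -Eb Eint; apply: ae_eq_integral => //.
  - exact: mE (mp _ mB).
  - exact: mE.
  - by move: aeb; apply: filterS => s /andP[b0 _] _; rewrite pos_id// ltW.
have IC : (\int[P]_x (pos (gamma x))%:E = (2^-1)%:E)%E.
  rewrite -div1r -Ec Eint; apply: ae_eq_integral => //.
  - exact: mE (mp _ mC).
  - exact: mE.
  - by move: aec; apply: filterS => s /andP[b0 _] _; rewrite pos_id// ltW.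

have PN : forall (X : {RV P >-> R}) (m : R), P.-integrable setT (EFin \o X) ->
    ('E_P[X] = m%:E)%E ->
  exists p n : R, [/\ (\int[P]_x (pos (X x))%:E = p%:E)%E,
     (\int[P]_x (neg (X x))%:E = n%:E)%E & p - n = m].
  move=> X m iX EX.
  have mX : measurable_fun setT (X : T -> R) by [].
  move/integrableP: (iX) => [_ hX].
  have hp : (\int[P]_x (pos (X x))%:E < +oo)%E.
    apply: le_lt_trans hX; apply: ge0_le_integral => //.
    - by move=> x _; rewrite lee_fin pos_ge0.
    - exact: mE (mp _ mX).
    - by apply: measurableT_comp => //; exact: mE.
    - by move=> x _ /=; rewrite lee_fin pos_le.
  have hn : (\int[P]_x (neg (X x))%:E < +oo)%E.
    apply: le_lt_trans hX; apply: ge0_le_integral => //.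
    - by move=> x _; rewrite lee_fin neg_ge0.
    - exact: mE (mn _ mX).
    - by apply: measurableT_comp => //; exact: mE.
    - by move=> x _ /=; rewrite lee_fin neg_le.
  have fp : (\int[P]_x (pos (X x))%:E)%E \is a fin_num.
    by rewrite ge0_fin_numE// integral_ge0// => x _; rewrite lee_fin pos_ge0.
  have fn : (\int[P]_x (neg (X x))%:E)%E \is a fin_num.
    by rewrite ge0_fin_numE// integral_ge0// => x _; rewrite lee_fin neg_ge0.
  exists (fine (\int[P]_x (pos (X x))%:E)%E), (fine (\int[P]_x (neg (X x))%:E)%E).
  split; [by rewrite fineK|by rewrite fineK|].
  have : ((fine (\int[P]_x (pos (X x))%:E) - fine (\int[P]_x (neg (X x))%:E))%:E = m%:E)%E.
    rewrite -EX Eint EFinB !fineK// -integralB_EFin//.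
    - by apply: eq_integral => x _; rewrite -EFinB posB.
    - by apply/Lfun1_integrable; apply: nn_Lfun; [exact: mp|move=> x; exact: pos_ge0|exact: hp].
    - by apply/Lfun1_integrable; apply: nn_Lfun; [exact: mn|move=> x; exact: neg_ge0|exact: hn].
  by case.
have [p1 [n1 [Ip1 In1 pn1]]] := PN x1 mu1 ix1 Ex1.
have [p2 [n2 [Ip2 In2 pn2]]] := PN x2 mu2 ix2 Ex2.

have I1 : (\int[P]_x (1%R)%:E = 1)%E.
  by rewrite integral_cst//= probability_setT mul1e.
have hA : (\int[P]_x (pos (alpha x))%:E < +oo)%E by rewrite IA ltry.
have hOA : (\int[P]_x (om (alpha x))%:E < +oo)%E by rewrite IOA ltry.
have hB : (\int[P]_x (pos (beta x))%:E < +oo)%E by rewrite IB ltry.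
have hC : (\int[P]_x (pos (gamma x))%:E < +oo)%E by rewrite IC ltry.
have m1 : measurable_fun [set: R] (fun _ : R => (1:R)) by exact: mCf.
have E1 : ('E_P[fun x => (pos (alpha x) * pos (beta x) * pos (x1 x))%R]
    = (2^-1 * 2^-1 * p1)%:E)%E.
  rewrite Eint; etransitivity.
    exact: (@TL _ _ _ P alpha beta x1 mA mB mX1 H3b pos pos pos mpos pos_ge0 hA
      mpos pos_ge0 hB mpos pos_ge0).
  by rewrite IA IB Ip1 -!EFinM.
have E2 : ('E_P[fun x => (pos (alpha x) * pos (beta x) * neg (x1 x))%R]
    = (2^-1 * 2^-1 * n1)%:E)%E.
  rewrite Eint; etransitivity.
    exact: (@TL _ _ _ P alpha beta x1 mA mB mX1 H3b pos pos neg mpos pos_ge0 hA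
      mpos pos_ge0 hB mneg neg_ge0).
  by rewrite IA IB In1 -!EFinM.
have E3 : ('E_P[fun x => (pos (alpha x) * pos (beta x) * 1)%R]
    = (2^-1 * 2^-1 * 1)%:E)%E.
  rewrite Eint; etransitivity.
    exact: (@TL _ _ _ P alpha beta x1 mA mB mX1 H3b pos pos (fun=> 1) mpos pos_ge0 hA
      mpos pos_ge0 hB m1 (fun=> ler01)).
  by rewrite IA IB I1 -!EFinM.
have E4 : ('E_P[fun x => (om (alpha x) * pos (gamma x) * pos (x2 x))%R]
    = (2^-1 * 2^-1 * p2)%:E)%E.
  rewrite Eint; etransitivity.
    exact: (@TL _ _ _ P alpha gamma x2 mA mC mX2 H3c om pos pos mom om_ge0 hOA
      mpos pos_ge0 hC mpos pos_ge0).
  by rewrite IOA IC Ip2 -!EFinM.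
have E5 : ('E_P[fun x => (om (alpha x) * pos (gamma x) * neg (x2 x))%R]
    = (2^-1 * 2^-1 * n2)%:E)%E.
  rewrite Eint; etransitivity.
    exact: (@TL _ _ _ P alpha gamma x2 mA mC mX2 H3c om pos neg mom om_ge0 hOA
      mpos pos_ge0 hC mneg neg_ge0).
  by rewrite IOA IC In2 -!EFinM.
have E6' : ('E_P[fun x => (om (alpha x) * pos (gamma x) * 1)%R]
    = (2^-1 * 2^-1 * 1)%:E)%E.
  rewrite Eint; etransitivity.
    exact: (@TL _ _ _ P alpha gamma x2 mA mC mX2 H3c om pos (fun=> 1) mom om_ge0 hOA
      mpos pos_ge0 hC m1 (fun=> ler01)).
  by rewrite IOA IC I1 -!EFinM.
have LF : forall f : T -> R, measurable_fun setT f -> (forall x, 0 <= f x) ->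
    forall e : R, ('E_P[f] = e%:E)%E -> f \in Lfun P 1.
  by move=> f mf f0 e Ef; apply: nn_Lfun => //; rewrite -Eint Ef ltry.
have nn3 : forall a b c : R, 0 <= a -> 0 <= b -> 0 <= c -> 0 <= a * b * c.
  by move=> a b c a0 b0 c0; rewrite !mulr_ge0.
have l1 : (fun x => (pos (alpha x) * pos (beta x) * pos (x1 x))%R) \in Lfun P 1.
  apply: (LF _ _ _ _ E1).
  - apply: mM; [apply: mM|]; [exact: mp|exact: mp|exact: mp].
  - by move=> x; apply: nn3; [exact: pos_ge0|exact: pos_ge0|exact: pos_ge0].
have l2 : (fun x => (pos (alpha x) * pos (beta x) * neg (x1 x))%R) \in Lfun P 1.
  apply: (LF _ _ _ _ E2).
  - apply: mM; [apply: mM|]; [exact: mp|exact: mp|exact: mn].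
  - by move=> x; apply: nn3; [exact: pos_ge0|exact: pos_ge0|exact: neg_ge0].
have l3 : (fun x => (pos (alpha x) * pos (beta x) * 1)%R) \in Lfun P 1.
  apply: (LF _ _ _ _ E3).
  - apply: mM; [apply: mM|]; [exact: mp|exact: mp|exact: mCf].
  - by move=> x; apply: nn3; [exact: pos_ge0|exact: pos_ge0|exact: ler01].
have l4 : (fun x => (om (alpha x) * pos (gamma x) * pos (x2 x))%R) \in Lfun P 1.
  apply: (LF _ _ _ _ E4).
  - apply: mM; [apply: mM|]; [exact: mo|exact: mp|exact: mp].
  - by move=> x; apply: nn3; [exact: om_ge0|exact: pos_ge0|exact: pos_ge0].
have l5 : (fun x => (om (alpha x) * pos (gamma x) * neg (x2 x))%R) \in Lfun P 1.
  apply: (LF _ _ _ _ E5).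
  - apply: mM; [apply: mM|]; [exact: mo|exact: mp|exact: mn].
  - by move=> x; apply: nn3; [exact: om_ge0|exact: pos_ge0|exact: neg_ge0].
have l6 : (fun x => (om (alpha x) * pos (gamma x) * 1)%R) \in Lfun P 1.
  apply: (LF _ _ _ _ E6').
  - apply: mM; [apply: mM|]; [exact: mo|exact: mp|exact: mCf].
  - by move=> x; apply: nn3; [exact: om_ge0|exact: pos_ge0|exact: ler01].

have aea : {ae P, forall s, 0 <= alpha s <= 1}.
  exists (alpha @^-1` (~` `[0%R, 1%R])); split.
  - by apply: mpre => //; exact: measurableC.
  - exact: (@unif_ae _ _ _ P alpha DU).
  - move=> s /= h h2; apply: h; move: h2; by rewrite /= in_itv.
rewrite (_ : ('E_P[fun s => udp_step eta w (alpha s) (beta s) (gamma s) (x1 s) (x2 s)])%E =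
  ('E_P[(cst w \+ eta \o* (
    (fun x => (pos (alpha x) * pos (beta x) * pos (x1 x))%R)
    \+ (-1) \o* (fun x => (pos (alpha x) * pos (beta x) * neg (x1 x))%R)
    \+ (- w) \o* (fun x => (pos (alpha x) * pos (beta x) * 1)%R)
    \+ (fun x => (om (alpha x) * pos (gamma x) * pos (x2 x))%R)
    \+ (-1) \o* (fun x => (om (alpha x) * pos (gamma x) * neg (x2 x))%R)
    \+ (- w) \o* (fun x => (om (alpha x) * pos (gamma x) * 1)%R)))%R])%E); last first.
  rewrite !Eint; apply: ae_eq_integral => //.
  - by apply: mE; rewrite /udp_step; mtac.
  - apply: mE.
    match goal with |- measurable_fun _ ?F =>
      have lY : F \in Lfun P 1 end.
      apply: rpredD; first exact: Lfun_cst.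
      apply: Lfun_scale => //.
      by repeat (first [assumption | apply: rpredD | apply: Lfun_scale => //]).
    by move/sub_Lfun_mfun: lY; rewrite inE.
  - move: aea aeb aec; apply: filterS3 => s /andP[a0 a1] /andP[b0 _] /andP[c0 _] _.
    congr EFin; rewrite /udp_step/= (pos_id _ a0) (pos_id _ (ltW b0)) (pos_id _ (ltW c0)) (om_id _ a1).
    have e1 := posB (x1 s); have e2 := posB (x2 s).
    move: e1 e2; move: (pos (x1 s)) (neg (x1 s)) (pos (x2 s)) (neg (x2 s)) => P1 N1 P2 N2 e1 e2.
    rewrite -e1 -e2; ring.
rewrite (@E6 _ _ _ P _ _ _ _ _ _ w eta _ _ _ _ _ _ l1 l2 l3 l4 l5 l6 E1 E2 E3 E4 E5 E6').
congr EFin; rewrite -pn1 -pn2; field.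
by [].
Qed.
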